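(* Let $\overrightarrow{W}$ be a Morse sequence on a simplicial complex $K$. Then for every integer $p\ge0$, the complex $W^-_{p+1}$ collapses onto $W^+_p$.
   Context: A simplicial complex $K$ is a finite collection of non-empty finite sets closed under taking non-empty subsets; $\dim\sigma=|\sigma|-1$. A pair $(\sigma,\tau)$ with $\sigma\subsetneq\tau$ is a free pair for $K$ if $\tau$ is the only simplex other than $\sigma$ containing $\sigma$; then $K\setminus\{\sigma,\tau\}$ is an elementary collapse of $K$ and $K$ an elementary expansion of $K\setminus\{\sigma,\tau\}$. $K$ collapses onto $L$ if there is a sequence $\langle K=L_0,\dots,L_m=L\rangle$, $m\ge0$, with each $L_j$ an elementary collapse of $L_{j-1}$. If $\nu$ is a facet (maximal simplex) of $K$, $K$ is an elementary filling of $K\setminus\{\nu\}$. A Morse sequence on $K$ is a sequence $\langle\emptyset=K_0,\dots,K_k=K\rangle$ with each $K_i$ an elementary expansion or filling of $K_{i-1}$; simplices added by fillings are critical; for an expansion $K_i=K_{i-1}\cup\{\sigma,\tau\}$, $\sigma\subset\tau$, $\sigma$ is lower regular and $\tau$ upper regular. Writing $\widehat W,\underline W,\overline W$ for the sets of critical, lower regular and upper regular simplices, the lower and upper $p$-skeletons are $W^-_p=\{\nu\in\overline W:\dim\nu\le p\}\cup\{\nu\in\widehat W\cup\underline W:\dim\nu\le p-1\}$ and $W^+_p=\{\nu\in\widehat W\cup\overline W:\dim\nu\le p\}\cup\{\nu\in\underline W:\dim\nu\le p-1\}$ (these are simplicial complexes). *)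

(* Defs.v *)
(* Simplices are non-empty finite sets of vertices drawn from a
   finite type T; a complex is a {set {set T}}. *)
From mathcomp Require Import all_boot.
Set Implicit Arguments. Unset Strict Implicit. Unset Printing Implicit Defensive.

Section Defs.
Variable T : finType.
Local Notation cplx := {set {set T}}.

Definition simplicial_complex (K : cplx) : Prop :=
  set0 \notin K /\
  forall s t : {set T}, s \in K -> t != set0 -> t \subset s -> t \in K.

Definition free_pair (K : cplx) (s t : {set T}) : bool :=
  [&& s \proper t, s \in K, t \in K &
      [forall u : {set T}, ((u \in K) && (s \subset u)) ==> ((u == s) || (u == t))]].

(* L is the elementary collapse K \ {s,t} of K along the free pair (s,t);
   equivalently K is the elementary expansion K = L u {s,t} of L. *)
Definition elem_collapse_along (K L : cplx) (s t : {set T}) : bool :=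
  free_pair K s t && (L == K :\: [set s; t]).

Definition elem_collapse (K L : cplx) : Prop :=
  exists s t, elem_collapse_along K L s t.

Inductive collapses : cplx -> cplx -> Prop :=
| collapses_refl K : collapses K K
| collapses_step K K1 L : elem_collapse K K1 -> collapses K1 L -> collapses K L.

Definition facet (K : cplx) (nu : {set T}) : bool :=
  (nu \in K) && [forall u : {set T}, (u \in K) ==> ~~ (nu \proper u)].

Definition elem_filling_with (K K' : cplx) (nu : {set T}) : bool :=
  facet K' nu && (K == K' :\ nu).

Definition Wat (W : seq cplx) (i : nat) : cplx := nth set0 W i.

Definition morse_sequence (K : cplx) (W : seq cplx) : Prop :=
  [/\ 0 < size W, Wat W 0 = set0, last set0 W = K,
      forall i, i < size W -> simplicial_complex (Wat W i) &
      forall i, i.+1 < size W ->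
        (exists s t, elem_collapse_along (Wat W i.+1) (Wat W i) s t) \/
        (exists nu, elem_filling_with (Wat W i) (Wat W i.+1) nu)].

Definition Wcrit (W : seq cplx) : cplx :=
  [set nu | [exists i : 'I_(size W), (i.+1 < size W) &&
               elem_filling_with (Wat W i) (Wat W i.+1) nu]].

Definition Wlower (W : seq cplx) : cplx :=
  [set s | [exists i : 'I_(size W), exists t : {set T}, (i.+1 < size W) &&
               elem_collapse_along (Wat W i.+1) (Wat W i) s t]].

Definition Wupper (W : seq cplx) : cplx :=
  [set t | [exists i : 'I_(size W), exists s : {set T}, (i.+1 < size W) &&
               elem_collapse_along (Wat W i.+1) (Wat W i) s t]].

(* dim nu <= p  <->  #|nu| <= p+1 ;  dim nu <= p-1  <->  #|nu| <= p *)
Definition lower_skeleton (W : seq cplx) (p : nat) : cplx :=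
  [set nu | ((nu \in Wupper W) && (#|nu| <= p.+1))
         || (((nu \in Wcrit W) || (nu \in Wlower W)) && (#|nu| <= p))].

Definition upper_skeleton (W : seq cplx) (p : nat) : cplx :=
  [set nu | (((nu \in Wcrit W) || (nu \in Wupper W)) && (#|nu| <= p.+1))
         || ((nu \in Wlower W) && (#|nu| <= p))].

End Defs.

(* Main.v *)
Require Import Defs.
From mathcomp Require Import all_boot.
Set Implicit Arguments. Unset Strict Implicit. Unset Printing Implicit Defensive.

Lemma collapses_trans (T : finType) (A B C : {set {set T}}) :
  collapses A B -> collapses B C -> collapses A C.
Proof.
elim=> [//|K K1 L H _ IH] HC; apply: collapses_step H (IH HC).
Qed.

Lemma free_card (T : finType) (C : {set {set T}}) s t :
  simplicial_complex C -> free_pair C s t -> #|t| = #|s|.+1.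
Proof.
move=> [_ Hsc] /and4P[Hst Hs Ht /forallP Hu].
have [x xt xs] : exists2 x, x \in t & x \notin s.
  move: Hst; rewrite properE => /andP[_ /subsetPn[x xt xs]]; by exists x.
have sub : x |: s \subset t.
  apply/subsetP=> y; rewrite !inE => /orP[/eqP->//|ys].
  by move: Hst => /proper_sub/subsetP; apply.
have ne : x |: s != set0.
  by apply/set0Pn; exists x; rewrite !inE eqxx.
have := Hu (x |: s); rewrite (Hsc _ _ Ht ne sub) subsetUr /=.
case/orP=> /eqP E.
  by move: xs; rewrite -E !inE eqxx.
by rewrite -E cardsU1 xs.
Qed.

Section Pf.
Variable T : finType.
Variable W : seq {set {set T}}.
Hypothesis Hsc : forall i, i < size W -> simplicial_complex (Wat W i).
Hypothesis Hstep : forall i, i.+1 < size W ->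
        (exists s t, elem_collapse_along (Wat W i.+1) (Wat W i) s t) \/
        (exists nu, elem_filling_with (Wat W i) (Wat W i.+1) nu).

Lemma sub_step i : i.+1 < size W -> Wat W i \subset Wat W i.+1.
Proof.
move=> Hi; case: (Hstep Hi) => [[s [t /andP[_ /eqP->]]]|[nu /andP[_ /eqP->]]];
exact: subsetDl.
Qed.

Lemma sub_mono i j : i <= j -> j < size W -> Wat W i \subset Wat W j.
Proof.
elim: j => [|j IH]; first by rewrite leqn0 => /eqP-> _; exact: subxx.
rewrite leq_eqVlt => /orP[/eqP-> _|Hij Hj]; first exact: subxx.
rewrite ltnS in Hij.
exact: subset_trans (IH Hij (ltnW Hj)) (sub_step Hj).
Qed.

Lemma step_uniq i j x : i.+1 < size W -> j.+1 < size W ->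
  x \in Wat W i.+1 -> x \notin Wat W i ->
  x \in Wat W j.+1 -> x \notin Wat W j -> i = j.
Proof.
move=> Hi Hj a b c d.
case: (ltngtP i j) => // h.
  by move: d; rewrite (subsetP (sub_mono h (ltnW Hj)) _ a).
by move: b; rewrite (subsetP (sub_mono h (ltnW Hi)) _ c).
Qed.

Lemma crit_new nu : nu \in Wcrit W ->
  exists2 i, i.+1 < size W & elem_filling_with (Wat W i) (Wat W i.+1) nu.
Proof. by rewrite inE => /existsP[i /andP[Hi H]]; exists i. Qed.

Lemma lower_new s : s \in Wlower W ->
  exists i t, i.+1 < size W /\ elem_collapse_along (Wat W i.+1) (Wat W i) s t.
Proof. by rewrite inE => /existsP[i /existsP[t /andP[Hi H]]]; exists i, t. Qed.

Lemma upper_new t : t \in Wupper W ->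
  exists i s, i.+1 < size W /\ elem_collapse_along (Wat W i.+1) (Wat W i) s t.
Proof. by rewrite inE => /existsP[i /existsP[s /andP[Hi H]]]; exists i, s. Qed.

Lemma fill_in i nu : elem_filling_with (Wat W i) (Wat W i.+1) nu ->
  nu \in Wat W i.+1 /\ nu \notin Wat W i.
Proof. by case/andP=> /andP[H _] /eqP->; rewrite !inE eqxx. Qed.

Lemma col_in i s t : elem_collapse_along (Wat W i.+1) (Wat W i) s t ->
  [/\ s \in Wat W i.+1, s \notin Wat W i, t \in Wat W i.+1 & t \notin Wat W i].
Proof. by case/andP=> /and4P[_ Hs Ht _] /eqP->; rewrite !inE !eqxx Hs Ht !orbT. Qed.

Lemma crit_upper x : x \in Wcrit W -> x \notin Wupper W.
Proof.
case/crit_new=> i Hi Hf; apply/negP=> /upper_new[j [s [Hj Hc]]].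
have [a b] := fill_in Hf; have [c d e f] := col_in Hc.
have E := step_uniq Hi Hj a b e f; subst j.
move: Hf Hc => /andP[_ /eqP E1] /andP[/and4P[Hst _ _ _] /eqP E2].
have : s \in Wat W i by rewrite E1 !inE c andbT; apply/eqP=> Es; subst s;
  move: Hst; rewrite properxx.
by rewrite (negbTE d).
Qed.

Lemma crit_lower x : x \in Wcrit W -> x \notin Wlower W.
Proof.
case/crit_new=> i Hi Hf; apply/negP=> /lower_new[j [t [Hj Hc]]].
have [a b] := fill_in Hf; have [c d e f] := col_in Hc.
have E := step_uniq Hi Hj a b c d; subst j.
move: Hf Hc => /andP[_ /eqP E1] /andP[/and4P[Hst _ _ _] /eqP E2].
have : t \in Wat W i by rewrite E1 !inE e andbT; apply/eqP=> Es; subst t;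
  move: Hst; rewrite properxx.
by rewrite (negbTE f).
Qed.

Lemma lower_upper x : x \in Wlower W -> x \notin Wupper W.
Proof.
case/lower_new=> i [t [Hi Hc]]; apply/negP=> /upper_new[j [s [Hj Hc']]].
have [a b c d] := col_in Hc; have [a' b' c' d'] := col_in Hc'.
have E := step_uniq Hi Hj a b c' d'; subst j.
move: Hc Hc' => /andP[/and4P[H1 _ _ _] /eqP E1] /andP[/and4P[H2 _ _ _] /eqP E2].
have : (t == s) || (t == x) by move: d; rewrite E2 !inE c andbT negbK.
move=> /orP[/eqP Ets|/eqP Etx].
  subst t. by move: (proper_trans H1 H2); rewrite properxx.
by subst t; move: H1; rewrite properxx.
Qed.

Variable p : nat.
Local Notation U := (upper_skeleton W p).
Local Notation Lo := (lower_skeleton W p.+1).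
Definition Lk n := U :|: (Lo :&: Wat W n).

Lemma inLo x : (x \in Lo) = ((x \in Wupper W) && (#|x| <= p.+2)) || (((x \in Wcrit W) || (x \in Wlower W)) && (#|x| <= p.+1)).
Proof. by unfold lower_skeleton; rewrite in_set. Qed.
Lemma inU x : (x \in U) = (((x \in Wcrit W) || (x \in Wupper W)) && (#|x| <= p.+1)) || ((x \in Wlower W) && (#|x| <= p)).
Proof. by unfold upper_skeleton; rewrite in_set. Qed.

Lemma U_Lo : U \subset Lo.
Proof.
apply/subsetP=> x; rewrite inLo inU.
case: (x \in Wcrit W); case: (x \in Wupper W); case: (x \in Wlower W) => /=.
all: rewrite ?orbF ?orbT ?andbF //=.
all: try (by move=> H; rewrite ltnW ?orbT).
all: by move=> /orP[H|H]; rewrite ?H ?orbT // ltnW ?orbT // ltnW.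
Qed.

Lemma U_card x : x \in U -> #|x| <= p.+1.
Proof. by rewrite inU => /orP[/andP[_ H]|/andP[_ H]] //; rewrite ltnW. Qed.

Lemma step_collapse n : n.+1 < size W -> collapses (Lk n.+1) (Lk n).
Proof.
move=> Hn; case: (Hstep Hn) => [[s [t Hc]]|[nu Hf]].
- have [a b c d] := col_in Hc.
  have sl : s \in Wlower W.
    by rewrite inE; apply/existsP; exists (Ordinal (ltnW Hn)); apply/existsP; exists t; rewrite /= Hn.
  have tu : t \in Wupper W.
    by rewrite inE; apply/existsP; exists (Ordinal (ltnW Hn)); apply/existsP; exists s; rewrite /= Hn.
  have snu := lower_upper sl.
  have snc : s \notin Wcrit W by apply/negP=> /crit_lower; rewrite sl.
  have tnl : t \notin Wlower W by apply/negP=> /lower_upper; rewrite tu.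
  move: Hc => /andP[Hfp /eqP E].
  have ct := free_card (Hsc Hn) Hfp.
  case: (eqVneq #|s| p.+1) => Hs.
  + apply: (@collapses_step _ _ (Lk n)); last exact: collapses_refl.
    have sU : s \in U = false.
      by rewrite inU (negbTE snu) (negbTE snc) sl Hs ltnn.
    have tU : t \in U = false.
      by rewrite inU tu (negbTE tnl) ct Hs ltnn /= andbF.
    have sLo : s \in Lo by rewrite inLo sl Hs ltnSn !orbT.
    have tLo : t \in Lo by rewrite inLo tu ct Hs ltnSn.
    exists s, t; apply/andP; split.
      move: Hfp => /and4P[Hst _ _ /forallP Hu].
      rewrite /free_pair Hst /Lk !in_setU !in_setI sLo tLo a c !orbT /=.
      apply/forallP=> u; apply/implyP=> /andP[]; rewrite /Lk in_setU in_setI => /orP[uU|/andP[_ uW]] su.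
        have : s == u by rewrite eqEcard su Hs (U_card uU).
        by move/eqP->; rewrite eqxx.
      by have /implyP := Hu u; apply; rewrite uW su.
    apply/eqP/setP=> x; rewrite /Lk E !in_setU !in_setI !in_setD !in_set2.
    case: (eqVneq x s) => [->|xs]; first by rewrite sU /= andbF.
    case: (eqVneq x t) => [->|xt]; first by rewrite tU orbT /= andbF.
    by rewrite /= in_setU in_setI.
  + suff -> : Lk n.+1 = Lk n by exact: collapses_refl.
    have sU : s \in Lo -> s \in U.
      rewrite inLo inU (negbTE snu) (negbTE snc) sl /= => H.
      by rewrite -ltnS ltn_neqAle Hs H.
    have tU : t \in Lo -> t \in U.
      rewrite inLo inU tu ct !ltnS => H.
      have H' : #|s| <= p.+1.
        by case/orP: H => /andP[_ H]//; rewrite ltnW.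
      have H2 : #|s| <= p by rewrite -ltnS ltn_neqAle Hs H'.
      by rewrite orbT H2.
    apply/setP=> x; rewrite /Lk E !in_setU !in_setI !in_setD !in_set2.
    case: (eqVneq x s) => [->|xs].
      by case sL: (s \in Lo); rewrite /= ?orbF // sU.
    case: (eqVneq x t) => [->|xt].
      by case tL: (t \in Lo); rewrite /= ?orbF // tU.
    by [].
- have [a b] := fill_in Hf.
  have nc : nu \in Wcrit W.
    by rewrite inE; apply/existsP; exists (Ordinal (ltnW Hn)); rewrite /= Hn.
  have nuU : nu \in Lo -> nu \in U.
    rewrite inLo inU nc (negbTE (crit_upper nc)) /= => ->; by [].
  move: Hf => /andP[_ /eqP E].
  suff -> : Lk n.+1 = Lk n by exact: collapses_refl.
  apply/setP=> x; rewrite /Lk E !in_setU !in_setI !in_setD1.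
  case: (eqVneq x nu) => [->|xs]; last by [].
  by case nL: (nu \in Lo); rewrite /= ?orbF // nuU.
Qed.

Lemma chain n : n < size W -> collapses (Lk n) (Lk 0).
Proof.
elim: n => [|n IH] Hn; first exact: collapses_refl.
exact: collapses_trans (step_collapse Hn) (IH (ltnW Hn)).
Qed.
End Pf.

Theorem theorem6 (T : finType) (K : {set {set T}}) (W : seq {set {set T}}) :
  simplicial_complex K -> morse_sequence K W ->
  forall p : nat, collapses (lower_skeleton W p.+1) (upper_skeleton W p).
Proof.
move=> _ [Hsz H0 _ Hsc Hstep] p.
have Hl : (size W).-1 < size W by rewrite prednK.
have := chain Hsc Hstep p Hl.
have -> : Lk W p 0 = upper_skeleton W p by rewrite /Lk H0 setI0 setU0.
suff -> : Lk W p (size W).-1 = lower_skeleton W p.+1 by [].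
rewrite /Lk (setIidPl _); first exact/setUidPr/U_Lo.
apply/subsetP=> x; rewrite inLo.
have fin : forall i, i.+1 < size W -> x \in Wat W i.+1 -> x \in Wat W (size W).-1.
  move=> i Hi xi; apply: (subsetP (sub_mono Hstep _ Hl)) xi.
  by rewrite -ltnS prednK.
case/orP=> /andP[+ _].
  by case/(upper_new)=> i [s [Hi /(col_in)[_ _ c _]]]; apply: fin Hi c.
case/orP.
  by case/crit_new=> i Hi /fill_in[a _]; apply: fin Hi a.
by case/lower_new=> i [t [Hi /col_in[a _ _ _]]]; apply: fin Hi a.
Qed.
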